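(* Let $F$ be a contravariant functor from the category of unital $C^*$-algebras to the category of sets whose restriction to the full subcategory of commutative unital $C^*$-algebras is isomorphic to $\operatorname{Gelf}$. Then for every unital $C^*$-algebra $A$ and every integer $n\geq 3$, $F(\mathrm{M}_n(A))=\varnothing$.
   Context: Morphisms of unital $C^*$-algebras are identity-preserving $*$-homomorphisms. $\operatorname{Gelf}(A)$ is the set of maximal ideals of a commutative unital $C^*$-algebra $A$, with a morphism $f$ sent to $M\mapsto f^{-1}(M)$. $\mathrm{M}_n(A)$ is the $C^*$-algebra of $n\times n$ matrices over $A$. *)

(* Defs.v *)
From HB Require Import structures.
From mathcomp Require Import all_boot all_order all_algebra complex.
From mathcomp Require Import reals Rstruct.
Set Implicit Arguments. Unset Strict Implicit. Unset Printing Implicit Defensive.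
Import Order.TTheory GRing.Theory Num.Theory.
Local Open Scope ring_scope.

Notation RR := Rdefinitions.R.
Definition CC : numClosedFieldType := RR[i].

Definition cabs (c : CC) : RR := ComplexField.Normc.normc c.

Definition complete_norm (V : zmodType) (nrm : V -> RR) : Prop :=
  forall u : nat -> V,
    (forall e : RR, 0 < e -> exists N : nat, forall m n : nat,
        (N <= m)%N -> (N <= n)%N -> nrm (u m - u n) < e) ->
    exists l : V, forall e : RR, 0 < e -> exists N : nat, forall n : nat,
        (N <= n)%N -> nrm (u n - l) < e.

Record CStarAlg := {
  cs_car :> algType CC;
  cs_star : cs_car -> cs_car;
  cs_norm : cs_car -> RR;
  cs_starD : forall x y, cs_star (x + y) = cs_star x + cs_star y;
  cs_starZ : forall (c : CC) x, cs_star (c *: x) = Num.conj c *: cs_star x;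
  cs_starM : forall x y, cs_star (x * y) = cs_star y * cs_star x;
  cs_starK : forall x, cs_star (cs_star x) = x;
  cs_norm_ge0 : forall x, 0 <= cs_norm x;
  cs_norm_eq0 : forall x, cs_norm x = 0 -> x = 0;
  cs_normD : forall x y, cs_norm (x + y) <= cs_norm x + cs_norm y;
  cs_normZ : forall (c : CC) x, cs_norm (c *: x) = cabs c * cs_norm x;
  cs_normM : forall x y, cs_norm (x * y) <= cs_norm x * cs_norm y;
  cs_cstar : forall x, cs_norm (cs_star x * x) = cs_norm x ^+ 2;
  cs_complete : complete_norm cs_norm
}.

Definition is_unital_star_hom (A B : CStarAlg) (f : A -> B) : Prop :=
  [/\ forall x y, f (x + y) = f x + f y,
      forall (c : CC) x, f (c *: x) = c *: f x,
      forall x y, f (x * y) = f x * f y,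
      f 1 = 1 &
      forall x, f (cs_star x) = cs_star (f x)].

Definition Hom (A B : CStarAlg) := {f : A -> B | is_unital_star_hom f}.

(** Functoriality is stated extensionally: any morphism acting as the identity
    is sent to the identity, and any morphism h acting as g \o f is sent to
    F f \o F g. *)
Record CoFunctor := {
  Fobj : CStarAlg -> Type;
  Fmor : forall A B : CStarAlg, Hom A B -> Fobj B -> Fobj A;
  Fmor_id : forall (A : CStarAlg) (f : Hom A A),
      (forall x, sval f x = x) -> forall y, Fmor f y = y;
  Fmor_comp : forall (A B C : CStarAlg) (f : Hom A B) (g : Hom B C) (h : Hom A C),
      (forall x, sval h x = sval g (sval f x)) ->
      forall z, Fmor h z = Fmor f (Fmor g z)
}.

Definition commutative_cstar (A : CStarAlg) : Prop := forall x y : A, x * y = y * x.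

Definition proper_ideal (A : CStarAlg) (I : A -> Prop) : Prop :=
  [/\ I 0,
      forall x y, I x -> I y -> I (x + y),
      forall a x, I x -> I (a * x),
      forall a x, I x -> I (x * a) &
      ~ I 1].

Definition maximal_ideal (A : CStarAlg) (M : A -> Prop) : Prop :=
  proper_ideal M /\
  forall J : A -> Prop, proper_ideal J -> (forall x, M x -> J x) ->
    forall x, J x -> M x.

Definition Gelf (A : CStarAlg) := {M : A -> Prop | maximal_ideal M}.

(** The restriction of F to commutative unital C*-algebras is naturally
    isomorphic to Gelf, whose action on a morphism f is M |-> f^{-1}(M). *)
Definition restr_iso_Gelf (F : CoFunctor) : Prop :=
  exists eta : forall A : CStarAlg, commutative_cstar A -> Fobj F A -> Gelf A,
    (forall A (hA : commutative_cstar A), bijective (eta A hA)) /\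
    (forall (A B : CStarAlg) (hA : commutative_cstar A) (hB : commutative_cstar B)
            (f : Hom A B) (y : Fobj F B),
        sval (eta A hA (@Fmor F A B f y)) = (fun a => sval (eta B hB y) (sval f a))).

Definition mx_star (A : CStarAlg) (n : nat) (X : 'M[A]_n) : 'M[A]_n :=
  \matrix_(i, j) cs_star (X j i).

(** B is (a C*-algebra) isomorphic, as a unital *-algebra, to M_n(A)
    (i.e. B is M_n(A) equipped with its unique C*-norm). *)
Definition is_Mn (A : CStarAlg) (n : nat) (B : CStarAlg) : Prop :=
  exists phi : 'M[A]_n -> B,
    bijective phi /\
    [/\ forall X Y, phi (X + Y) = phi X + phi Y,
        forall (c : CC) X, phi (map_mx (fun a : A => c *: a) X) = c *: phi X,
        forall X Y, phi (X *m Y) = phi X * phi Y,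
        phi 1%:M = 1 &
        forall X, phi (mx_star X) = cs_star (phi X)].

(* Main.v *)
Require Import Defs.
From Stdlib Require Import Reals.
From mathcomp Require Import all_boot all_order all_algebra complex.
From mathcomp Require Import reals Rstruct.
From mathcomp Require Import ring.
From mathcomp Require Import fingroup perm.
Set Implicit Arguments. Unset Strict Implicit. Unset Printing Implicit Defensive.
Import Order.TTheory GRing.Theory Num.Theory.
Local Open Scope ring_scope.
Lemma Rcompl (u : nat -> RR) :
  (forall e : RR, 0 < e -> exists N, forall m n, (N <= m)%N -> (N <= n)%N -> `|u m - u n| < e) ->
  exists l, forall e : RR, 0 < e -> exists N, forall n, (N <= n)%N -> `|u n - l| < e.
Proof.
move=> Hc.
have [l Hl] : {l | Un_cv u l}.
  apply: R_complete => e /RltP e0.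
  have [N HN] := Hc e e0; exists N => n m /ssrnat.leP Hn /ssrnat.leP Hm.
  by apply/RltP; rewrite /Rdist; apply: HN.
exists l => e /RltP e0; have [N HN] := Hl e e0; exists N => n /ssrnat.leP Hn.
by apply/RltP; apply: HN.
Qed.
Lemma le_max_l (x y : RR) : x <= Num.max x y. Proof. by rewrite le_max lexx. Qed.
Lemma le_max_r (x y : RR) : y <= Num.max x y. Proof. by rewrite le_max lexx orbT. Qed.
Lemma cabs_Re (z : CC) : `|complex.Re z| <= cabs z.
Proof.
case: z => a b; rewrite /cabs /= -sqrtr_sqr ler_wsqrtr // lerDl sqr_ge0 //.
Qed.
Lemma cabs_Im (z : CC) : `|complex.Im z| <= cabs z.
Proof.
case: z => a b; rewrite /cabs /= -sqrtr_sqr ler_wsqrtr // lerDr sqr_ge0 //.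
Qed.
Lemma cabs_le (z : CC) : cabs z <= `|complex.Re z| + `|complex.Im z|.
Proof.
case: z => a b; rewrite /cabs /=.
have -> : `|a| + `|b| = Num.sqrt ((`|a| + `|b|) ^+ 2) by by rewrite sqrtr_sqr (ger0_norm (addr_ge0 (normr_ge0 a) (normr_ge0 b))).
rewrite ler_wsqrtr //.
by rewrite sqrrD !real_normK ?num_real // lerD2r lerDl mulrn_wge0 // mulr_ge0.
Qed.
Lemma Re_sub (x y : CC) : complex.Re (x - y) = complex.Re x - complex.Re y.
Proof. by case: x; case: y. Qed.
Lemma Im_sub (x y : CC) : complex.Im (x - y) = complex.Im x - complex.Im y.
Proof. by case: x; case: y. Qed.

Lemma CC_complete : complete_norm cabs.
Proof.
move=> u Hc.
have [lr Hr] : exists lr, forall e : RR, 0 < e -> exists N, forall n, (N <= n)%N -> `|complex.Re (u n) - lr| < e.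
  apply: Rcompl => e e0; have [N HN] := Hc e e0; exists N => m n hm hn.
  by apply: le_lt_trans (HN m n hm hn); rewrite -Re_sub; exact: cabs_Re.
have [li Hi] : exists li, forall e : RR, 0 < e -> exists N, forall n, (N <= n)%N -> `|complex.Im (u n) - li| < e.
  apply: Rcompl => e e0; have [N HN] := Hc e e0; exists N => m n hm hn.
  by apply: le_lt_trans (HN m n hm hn); rewrite -Im_sub; exact: cabs_Im.
exists ((lr +i* li)%C : CC) => e e0.
have e20 : 0 < e / 2 by rewrite divr_gt0.
have [N1 H1] := Hr _ e20; have [N2 H2] := Hi _ e20.
exists (maxn N1 N2) => n hn.
apply: le_lt_trans (cabs_le _) _.
rewrite Re_sub Im_sub /= (splitr e) ltrD //.
  by apply: H1; apply: leq_trans hn; rewrite leq_maxl.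
by apply: H2; apply: leq_trans hn; rewrite leq_maxr.
Qed.

Lemma complete_max (V1 V2 : zmodType) (n1 : V1 -> RR) (n2 : V2 -> RR) :
  complete_norm n1 -> complete_norm n2 ->
  complete_norm (fun x : V1 * V2 => Num.max (n1 x.1) (n2 x.2)).
Proof.
move=> c1 c2 u Hc.
have C1 : forall e : RR, 0 < e -> exists N, forall m n, (N<=m)%N -> (N<=n)%N -> n1 ((u m).1 - (u n).1) < e.
  move=> e e0; have [N HN] := Hc e e0; exists N => m n hm hn.
  exact: le_lt_trans (le_max_l _ _) (HN m n hm hn).
have [l1 H1] := c1 _ C1.
have C2 : forall e : RR, 0 < e -> exists N, forall m n, (N<=m)%N -> (N<=n)%N -> n2 ((u m).2 - (u n).2) < e.
  move=> e e0; have [N HN] := Hc e e0; exists N => m n hm hn.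
  exact: le_lt_trans (le_max_r _ _) (HN m n hm hn).
have [l2 H2] := c2 _ C2.
exists (l1, l2) => e e0.
have [N1 K1] := H1 _ e0; have [N2 K2] := H2 _ e0.
exists (maxn N1 N2) => n hn.
rewrite gt_max; apply/andP; split.
  by apply: K1; apply: leq_trans hn; rewrite leq_maxl.
by apply: K2; apply: leq_trans hn; rewrite leq_maxr.
Qed.
Definition C1 : algType CC := CC^o.

Lemma cabs_conj (x : CC) : cabs (Num.conj x) = cabs x.
Proof. by case: x => a b; rewrite /cabs /= sqrrN. Qed.

Lemma cabs_ge0 (x : CC) : 0 <= cabs x.
Proof. by case: x => a b; rewrite /cabs /= sqrtr_ge0. Qed.

Definition CCstar : CStarAlg.
Proof.
refine (@Build_CStarAlg C1 (fun x : C1 => (Num.conj (x : CC) : C1)) cabs _ _ _ _ _ _ _ _ _ _ _).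
- by move=> x y; rewrite rmorphD.
- by move=> c x; rewrite /GRing.scale /= rmorphM.
- by move=> x y; rewrite /= rmorphM mulrC.
- by move=> x; rewrite conjCK.
- exact: cabs_ge0.
- exact: (@ComplexField.Normc.eq0_normc _).
- exact: (@le_normcD _).
- by move=> c x; rewrite /cabs -ComplexField.Normc.normcM.
- by move=> x y; rewrite /cabs ComplexField.Normc.normcM.
- by move=> x; rewrite /cabs ComplexField.Normc.normcM -/(cabs _) cabs_conj expr2.
- exact: CC_complete.
Defined.
Section Prod.
Variables A B : CStarAlg.
Definition PC : algType CC := (cs_car A * cs_car B)%type.
Definition pstar (x : PC) : PC := (cs_star x.1, cs_star x.2).
Definition pnorm (x : PC) : RR := Num.max (cs_norm x.1) (cs_norm x.2).

Lemma max_sqr (a b : RR) : 0 <= a -> 0 <= b -> Num.max (a ^+ 2) (b ^+ 2) = (Num.max a b) ^+ 2.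
Proof.
move=> a0 b0; rewrite !maxEle; case: (leP a b) => h.
  by rewrite ler_pXn2r ?nnegrE // h.
by rewrite leNgt ltr_pXn2r ?nnegrE // h.
Qed.

Definition ProdCStar : CStarAlg.
Proof.
refine (@Build_CStarAlg PC pstar pnorm _ _ _ _ _ _ _ _ _ _ _).
- by move=> x y; rewrite /pstar /= !cs_starD.
- by move=> c x; rewrite /pstar /= !cs_starZ.
- by move=> x y; rewrite /pstar /= !cs_starM.
- by move=> [x1 x2]; rewrite /pstar /= !cs_starK.
- by move=> x; rewrite /pnorm le_max cs_norm_ge0.
- move=> [x1 x2]; rewrite /pnorm /= => h.
  have h1 : cs_norm x1 = 0.
    apply/eqP; rewrite eq_le cs_norm_ge0 andbT -h; exact: le_max_l.
  have h2 : cs_norm x2 = 0.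
    apply/eqP; rewrite eq_le cs_norm_ge0 andbT -h; exact: le_max_r.
  by rewrite (cs_norm_eq0 h1) (cs_norm_eq0 h2).
- move=> x y; rewrite /pnorm ge_max; apply/andP; split.
    apply: le_trans (cs_normD _ _) _; apply: lerD; [exact: le_max_l|exact: le_max_l].
  apply: le_trans (cs_normD _ _) _; apply: lerD; [exact: le_max_r|exact: le_max_r].
- move=> c x; rewrite /pnorm /= !cs_normZ maxr_pMr //.
  by case: c => a b; rewrite /cabs /= sqrtr_ge0.
- move=> x y; rewrite /pnorm ge_max; apply/andP; split.
    apply: le_trans (cs_normM _ _) _; apply: ler_pM; rewrite ?cs_norm_ge0 //; exact: le_max_l.
  apply: le_trans (cs_normM _ _) _; apply: ler_pM; rewrite ?cs_norm_ge0 //; exact: le_max_r.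
- by move=> x; rewrite /pnorm /= !cs_cstar max_sqr ?cs_norm_ge0.
- exact: complete_max (@cs_complete A) (@cs_complete B).
Defined.
End Prod.

Definition C3 : CStarAlg := ProdCStar CCstar (ProdCStar CCstar CCstar).
Lemma C3_comm : commutative_cstar C3.
Proof.
move=> [a [b c]] [a' [b' c']].
by rewrite /GRing.mul /= /mul_pair /=; congr (_, (_, _)); apply: (@mulrC CC).
Qed.
From Stdlib Require Import ClassicalEpsilon Classical.

Record tri (B : CStarAlg) (p q r : B) : Prop := Tri {
  tpp : p * p = p; tqq : q * q = q; trr : r * r = r;
  tpq : p * q = 0; tqp : q * p = 0; tpr : p * r = 0; trp : r * p = 0;
  tqr : q * r = 0; trq : r * q = 0;
  tsum : p + q + r = 1;
  tsp : cs_star p = p; tsq : cs_star q = q; tsr : cs_star r = r }.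

Lemma tri_qpr (B : CStarAlg) (p q r : B) : tri p q r -> tri q p r.
Proof. case=> *; constructor => //; by rewrite (addrC q). Qed.
Lemma tri_rqp (B : CStarAlg) (p q r : B) : tri p q r -> tri r q p.
Proof. case=> *; constructor => //; by rewrite addrC (addrC r) addrA. Qed.

Lemma star0 (B : CStarAlg) : cs_star (0 : B) = 0.
Proof. by apply: (addrI (cs_star (0:B))); rewrite -cs_starD !addr0. Qed.

Lemma tri_c (B : CStarAlg) (p q r : B) : tri p q r -> tri p (1 - p) 0.
Proof.
case=> pp qq rr pq qp pr rp qr rq s sp sq sr.
have e : 1 - p = q + r.
  by apply/eqP; rewrite subr_eq -s [q + r + p]addrC addrA.
constructor; rewrite ?e ?mulr0 ?mul0r ?addr0 ?star0 //.
all: try (by rewrite mulrDr pq pr addr0).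
all: try (by rewrite mulrDl qp rp addr0).
all: try (by rewrite mulrDr !mulrDl qq rr qr rq addr0 add0r).
all: try (by rewrite -e addrC subrK).
all: try (by rewrite cs_starD sq sr).
Qed.

Definition fT (B : CStarAlg) (p q r : B) (x : C3) : B :=
  (x.1 : CC) *: p + (x.2.1 : CC) *: q + (x.2.2 : CC) *: r.

Lemma fT_hom (B : CStarAlg) (p q r : B) : tri p q r -> is_unital_star_hom (fT p q r).
Proof.
case=> pp qq rr pq qp pr rp qr rq s sp sq sr.
split.
- move=> [a [b c]] [a' [b' c']]; rewrite /fT /= !scalerDl.
  by rewrite [RHS]addrACA; congr (_ + _); exact: addrACA.
- move=> k [a [b c]]; rewrite /fT /= !scalerDr !scalerA //.
- move=> [a [b c]] [a' [b' c']]; rewrite /fT /=.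
  rewrite !mulrDl !mulrDr -!scalerAl -!scalerAr !scalerA pp qq rr pq qp pr rp qr rq.
  by rewrite !scaler0 !addr0 !add0r.
- by rewrite /fT /= !scale1r s.
- move=> [a [b c]]; rewrite /fT /= !cs_starD !cs_starZ sp sq sr //.
Qed.

Definition fTH (B : CStarAlg) (p q r : B) (H : tri p q r) : Defs.Hom C3 B :=
  exist _ (fT p q r) (fT_hom H).
Definition g1f (x : C3) : C3 := (x.1, (x.2.1, x.2.1)).
Definition s12f (x : C3) : C3 := (x.2.1, (x.1, x.2.2)).
Definition s13f (x : C3) : C3 := (x.2.2, (x.2.1, x.1)).

Lemma g1_hom : is_unital_star_hom g1f.
Proof. by split => //= [[a [b c]] [a' [b' c']]|k [a [b c]]|[a [b c]] [a' [b' c']]|[a [b c]]]. Qed.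
Lemma s12_hom : is_unital_star_hom s12f.
Proof. by split => //= [[a [b c]] [a' [b' c']]|k [a [b c]]|[a [b c]] [a' [b' c']]|[a [b c]]]. Qed.
Lemma s13_hom : is_unital_star_hom s13f.
Proof. by split => //= [[a [b c]] [a' [b' c']]|k [a [b c]]|[a [b c]] [a' [b' c']]|[a [b c]]]. Qed.

Definition e1 : C3 := (1, (0, 0)).
Definition e2 : C3 := (0, (1, 0)).
Definition e3 : C3 := (0, (0, 1)).

Lemma max_ideal_orth (A : CStarAlg) (M : A -> Prop) :
  commutative_cstar A -> maximal_ideal M ->
  forall u v : A, u * v = 0 -> ~ M u -> ~ M v -> False.
Proof.
move=> cA [[M0 MD ML MR M1] Mmax] u v uv Mu Mv.
apply: Mu; apply: (Mmax (fun x => M (x * v))); last by rewrite uv.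
- split.
  + by rewrite mul0r.
  + by move=> x y hx hy; rewrite mulrDl; apply: MD.
  + by move=> a x hx; rewrite -mulrA; apply: ML.
  + by move=> a x hx; rewrite (cA x a) -mulrA; apply: ML.
  + by rewrite mul1r.
- by move=> x hx; apply: MR.
Qed.

Lemma gelf3 (M : C3 -> Prop) : maximal_ideal M ->
  [/\ ~ (M e1 /\ M e2 /\ M e3),
      (~ M e1 -> M e2 /\ M e3),
      (~ M e2 -> M e1 /\ M e3) &
      (~ M e3 -> M e1 /\ M e2)].
Proof.
move=> hM; have o := max_ideal_orth C3_comm hM.
case: (hM) => [[M0 MD ML MR M1] _].
split.
- move=> [h1 [h2 h3]]; apply: M1.
  have -> : (1 : C3) = e1 + e2 + e3.
    by rewrite /e1 /e2 /e3; congr (_, (_, _)); rewrite /= ?addr0 ?add0r.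
  by apply: (MD) => //; apply: (MD).
- move=> h1; split; apply: NNPP => h.
  + by apply: (o e1 e2) => //; rewrite /e1 /e2 ; congr (_, (_, _)); rewrite /= ?mulr0 ?mul0r.
  + by apply: (o e1 e3) => //; rewrite /e1 /e3 ; congr (_, (_, _)); rewrite /= ?mulr0 ?mul0r.
- move=> h1; split; apply: NNPP => h.
  + by apply: (o e2 e1) => //; rewrite /e1 /e2 ; congr (_, (_, _)); rewrite /= ?mulr0 ?mul0r.
  + by apply: (o e2 e3) => //; rewrite /e2 /e3 ; congr (_, (_, _)); rewrite /= ?mulr0 ?mul0r.
- move=> h1; split; apply: NNPP => h.
  + by apply: (o e3 e1) => //; rewrite /e1 /e3 ; congr (_, (_, _)); rewrite /= ?mulr0 ?mul0r.
  + by apply: (o e3 e2) => //; rewrite /e2 /e3 ; congr (_, (_, _)); rewrite /= ?mulr0 ?mul0r.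
Qed.
Definition eo (a b c : bool) := [&& a || b || c, ~~ (a && b), ~~ (a && c) & ~~ (b && c)].

Lemma eo_of (P1 P2 P3 : Prop) (a b c : bool) : (a = true <-> ~P1) -> (b = true <-> ~P2) -> (c = true <-> ~P3) ->
  ~(P1/\P2/\P3) -> (~P1 -> P2/\P3) -> (~P2 -> P1/\P3) -> (~P3 -> P1/\P2) -> eo a b c.
Proof.
case: a; case: b; case: c; rewrite /eo /= => h1 h2 h3 A B C D //.
all: exfalso.
all: have t : true = true by [].
all: have f : ~ (false = true) by [].
all: tauto.
Qed.

Definition bP (P : Prop) : bool := if excluded_middle_informative P then true else false.
Lemma bPE (P : Prop) : bP P = true <-> P.
Proof. by rewrite /bP; case: excluded_middle_informative. Qed.

Lemma valuation (F : CoFunctor) : restr_iso_Gelf F -> forall B : CStarAlg, Fobj F B ->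
  exists v : B -> bool, forall p q r : B, tri p q r -> eo (v p) (v q) (v r).
Proof.
move=> [eta [_ nat]] B y.
pose MM (p q r : B) (H : tri p q r) : C3 -> Prop := sval (eta C3 C3_comm (Fmor (fTH H) y)).
have maxMM : forall p q r (H : tri p q r), maximal_ideal (MM p q r H).
  by move=> p q r H; exact: (proj2_sig (eta C3 C3_comm (Fmor (fTH H) y))).
have comp : forall (g : Defs.Hom C3 C3) p q r p' q' r' (H : tri p q r) (H' : tri p' q' r'),
    (forall x, fT p' q' r' x = fT p q r (sval g x)) -> forall a, MM p' q' r' H' a <-> MM p q r H (sval g a).
  move=> g p q r p' q' r' H H' Heq a.
  rewrite /MM (@Fmor_comp F C3 C3 B g (fTH H) (fTH H') Heq y).
  by rewrite (nat C3 C3 C3_comm C3_comm g (Fmor (fTH H) y)).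
pose v (p : B) := bP (exists H : tri p (1 - p) 0, ~ MM _ _ _ H e1).
have vE : forall p q r (H : tri p q r), v p = true <-> ~ MM p q r H e1.
  move=> p q r H.
  have key : forall H0 : tri p (1 - p) 0, MM _ _ _ H0 e1 <-> MM p q r H e1.
    move=> H0; apply: (comp (exist _ g1f g1_hom)) => x.
    have e : 1 - p = q + r.
      by apply/eqP; rewrite subr_eq -(tsum H) [q + r + p]addrC addrA.
    by rewrite /fT /= e scaler0 addr0 scalerDr addrA.
  rewrite bPE; split.
    by move=> [H0 h] h'; apply: h; apply/(key H0).
  by move=> h; exists (tri_c H) => h'; apply: h; apply/(key (tri_c H)).
exists v => p q r H.
have [A1 A2 A3 A4] := gelf3 (maxMM _ _ _ H).
have h2 : v q = true <-> ~ MM _ _ _ H e2.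
  have := vE _ _ _ (tri_qpr H).
  have : MM _ _ _ (tri_qpr H) e1 <-> MM _ _ _ H e2.
    apply: (comp (exist _ s12f s12_hom)) => x.
    by rewrite /fT /= [x.2.1 *: p + _]addrC.
  tauto.
have h3 : v r = true <-> ~ MM _ _ _ H e3.
  have := vE _ _ _ (tri_rqp H).
  have : MM _ _ _ (tri_rqp H) e1 <-> MM _ _ _ H e3.
    apply: (comp (exist _ s13f s13_hom)) => x.
    by rewrite /fT /= addrC [x.1 *: r + _]addrC addrA.
  tauto.
exact: (eo_of (vE _ _ _ H) h2 h3 A1 A2 A3 A4).
Qed.
Lemma star1 (B : CStarAlg) : cs_star (1 : B) = 1.
Proof.
have h : cs_star (1 : B) = cs_star (1 : B) * 1 by rewrite mulr1.
have := congr1 (@cs_star B) h; rewrite cs_starM !cs_starK mulr1 => h2.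
by rewrite -h2.
Qed.

Lemma tri_100 (B : CStarAlg) : tri (1 : B) 0 0.
Proof. by constructor; rewrite ?mulr0 ?mul0r ?mulr1 ?addr0 ?star0 ?star1. Qed.

Lemma v01 (B : CStarAlg) (v : B -> bool) :
  (forall p q r : B, tri p q r -> eo (v p) (v q) (v r)) -> v 0 = false /\ v 1 = true.
Proof.
move=> Hv; have := Hv _ _ _ (tri_100 B); rewrite /eo.
by case: (v 1); case: (v 0).
Qed.

Lemma tri_sum (B : CStarAlg) (p q r : B) : tri p q r -> tri (p + q) r 0.
Proof.
case=> pp qq rr pq qp pr rp qr rq s sp sq sr.
constructor; rewrite ?mulr0 ?mul0r ?addr0 ?star0 //.
- by rewrite mulrDl !mulrDr pp qq pq qp addr0 add0r.
- by rewrite mulrDl pr qr addr0.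
- by rewrite mulrDr rp rq addr0.
- by rewrite cs_starD sp sq.
Qed.

Lemma vsum (B : CStarAlg) (v : B -> bool) :
  (forall p q r : B, tri p q r -> eo (v p) (v q) (v r)) ->
  forall p q r : B, tri p q r -> v (p + q) = v p || v q.
Proof.
move=> Hv p q r H; have [v0 _] := v01 Hv.
have := Hv _ _ _ (tri_sum H); have := Hv _ _ _ H; rewrite /eo v0.
by case: (v p); case: (v q); case: (v r); case: (v (p + q)).
Qed.

Record quad (B : CStarAlg) (p q r s : B) : Prop := Quad {
  qpp : p * p = p; qqq : q * q = q; qrr : r * r = r; qss : s * s = s;
  qpq : p * q = 0; qqp : q * p = 0; qpr : p * r = 0; qrp : r * p = 0;
  qps : p * s = 0; qsp : s * p = 0; qqr : q * r = 0; qrq : r * q = 0;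
  qqs : q * s = 0; qsq : s * q = 0; qrs : r * s = 0; qsr : s * r = 0;
  qsum : p + q + r + s = 1;
  qsp' : cs_star p = p; qsq' : cs_star q = q; qsr' : cs_star r = r; qss' : cs_star s = s }.

Lemma quad_tri1 (B : CStarAlg) (p q r s : B) : quad p q r s -> tri r s (p + q).
Proof.
case=> pp qq rr ss pq qp pr rp ps sp qr rq qs sq rs sr sm sp' sq' sr' ss'; constructor; rewrite ?cs_starD ?mulrDl ?mulrDr ?pp ?qq ?rr ?ss ?pq ?qp ?pr ?rp ?ps ?sp ?qr ?rq ?qs ?sq ?rs ?sr ?sp' ?sq' ?sr' ?ss' ?addr0 ?add0r //.
by rewrite addrC addrA sm.
Qed.
Lemma quad_tri2 (B : CStarAlg) (p q r s : B) : quad p q r s -> tri p q (r + s).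
Proof.
case=> pp qq rr ss pq qp pr rp ps sp qr rq qs sq rs sr sm sp' sq' sr' ss'; constructor; rewrite ?cs_starD ?mulrDl ?mulrDr ?pp ?qq ?rr ?ss ?pq ?qp ?pr ?rp ?ps ?sp ?qr ?rq ?qs ?sq ?rs ?sr ?sp' ?sq' ?sr' ?ss' ?addr0 ?add0r //.
by rewrite addrA sm.
Qed.

Lemma quad_eo (B : CStarAlg) (v : B -> bool) :
  (forall p q r : B, tri p q r -> eo (v p) (v q) (v r)) ->
  forall p q r s : B, quad p q r s -> v s = false -> eo (v p) (v q) (v r).
Proof.
move=> Hv p q r s H vs.
have e1 := vsum Hv (quad_tri1 H).
have := Hv _ _ _ (quad_tri2 H).
rewrite (vsum Hv (quad_tri1 H)) vs orbF //.
Qed.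

Lemma quad_s (B : CStarAlg) (v : B -> bool) :
  (forall p q r : B, tri p q r -> eo (v p) (v q) (v r)) ->
  forall p q r s : B, quad p q r s -> v p = true -> v s = false.
Proof.
move=> Hv p q r s H vp.
have := Hv _ _ _ (quad_tri2 H).
rewrite (vsum Hv (quad_tri1 H)) vp /eo.
by case: (v q); case: (v r); case: (v s).
Qed.
Definition vec := (int * int * int)%type.
Definition vcn (u : vec) (n : nat) : int :=
  match n with 0 => u.1.1 | 1 => u.1.2 | _ => u.2 end.
Definition vc (u : vec) (i : 'I_3) : int := vcn u i.
Definition dot3 (u w : vec) : int := u.1.1 * w.1.1 + u.1.2 * w.1.2 + u.2 * w.2.

Lemma dotE (u w : vec) : \sum_(j < 3) vc u j * vc w j = dot3 u w.
Proof. by rewrite !big_ord_recr big_ord0 /= /vc /= add0r. Qed.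

Section Units.
Variable B : CStarAlg.
Variable e : 'I_3 -> 'I_3 -> B.
Hypothesis emul : forall i j k l, e i j * e k l = if j == k then e i l else 0.
Hypothesis estar : forall i j, cs_star (e i j) = e j i.

Definition E (X : 'I_3 -> 'I_3 -> int) : B :=
  \sum_(i < 3) \sum_(j < 3) ((X i j)%:~R : CC) *: e i j.

Lemma E_mul X Y : E X * E Y = E (fun i l => \sum_(j < 3) X i j * Y j l).
Proof.
rewrite /E mulr_suml; apply: eq_bigr => i _; rewrite mulr_suml.
have h : forall j, (\sum_(j0 < 3) ((X i j0)%:~R : CC) *: e i j0) * 0 = 0 by move=> j; rewrite mulr0.
transitivity (\sum_(j < 3) \sum_(l < 3) (((X i j)%:~R : CC) * (Y j l)%:~R) *: e i l).
  apply: eq_bigr => j _; rewrite big_distrr /= (bigD1 j) //= [X in _ + X]big1 ?addr0.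
    rewrite big_distrr /=; apply: eq_bigr => l _.
    by rewrite -scalerAl -scalerAr scalerA emul eqxx.
  move=> k /negbTE nk; rewrite big_distrr /= big1 // => l _; rewrite eq_sym in nk.
  by rewrite -scalerAl -scalerAr emul nk !scaler0.
rewrite exchange_big; apply: eq_bigr => l _.
by rewrite -scaler_suml rmorph_sum; congr (_ *: _); apply: eq_bigr => j _; rewrite rmorphM.
Qed.

Lemma E_ext X Y : (forall i j, X i j = Y i j) -> E X = E Y.
Proof. by move=> h; apply: eq_bigr => i _; apply: eq_bigr => j _; rewrite h. Qed.

Lemma E_scale (k : int) X : E (fun i j => k * X i j) = (k%:~R : CC) *: E X.
Proof.
rewrite /E scaler_sumr; apply: eq_bigr => i _; rewrite scaler_sumr.
by apply: eq_bigr => j _; rewrite scalerA rmorphM.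
Qed.

Lemma E_add X Y : E (fun i j => X i j + Y i j) = E X + E Y.
Proof.
rewrite /E -big_split; apply: eq_bigr => i _; rewrite -big_split.
by apply: eq_bigr => j _; rewrite rmorphD scalerDl.
Qed.

Lemma E_zero : E (fun _ _ => 0) = 0.
Proof. by rewrite /E big1 // => i _; rewrite big1 // => j _; rewrite scale0r. Qed.

Lemma star_sum (I : Type) (r : seq I) (P : pred I) (F : I -> B) :
  cs_star (\sum_(i <- r | P i) F i) = \sum_(i <- r | P i) cs_star (F i).
Proof. exact: (big_morph _ (@cs_starD B) (star0 B)). Qed.

Lemma E_star X : cs_star (E X) = E (fun i j => X j i).
Proof.
rewrite /E star_sum exchange_big; apply: eq_bigr => i _; rewrite star_sum.
apply: eq_bigr => j _; rewrite cs_starZ estar; congr (_ *: _).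
exact: rmorph_int.
Qed.

Definition outer (u : vec) i j := vc u i * vc u j.
Definition Nv (u : vec) := dot3 u u.
Definition P (u : vec) : B := ((Nv u)%:~R : CC)^-1 *: E (outer u).

Lemma outer_mul (u w : vec) i l :
  \sum_(j < 3) outer u i j * outer w j l = dot3 u w * (vc u i * vc w l).
Proof.
rewrite -dotE mulr_suml; apply: eq_bigr => j _; rewrite /outer.
ring.
Qed.

Lemma P_mul (u w : vec) : P u * P w = ((Nv u)%:~R : CC)^-1 * ((Nv w)%:~R)^-1 * (dot3 u w)%:~R *: E (fun i l => vc u i * vc w l).
Proof.
rewrite /P -scalerAl -scalerAr scalerA E_mul (E_ext (outer_mul u w)) E_scale scalerA //.
Qed.

Lemma P_orth (u w : vec) : dot3 u w = 0 -> P u * P w = 0.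
Proof. by move=> h; rewrite P_mul h mulr0 scale0r. Qed.

Lemma P_idem (u : vec) : Nv u != 0 -> P u * P u = P u.
Proof.
move=> h; rewrite P_mul -/(Nv u) -mulrA mulVf ?mulr1 //.
by rewrite intr_eq0.
Qed.

Lemma P_star (u : vec) : cs_star (P u) = P u.
Proof.
rewrite /P cs_starZ E_star; congr (_ *: _).
  by rewrite fmorphV rmorph_int.
by apply: E_ext => i j; rewrite /outer mulrC.
Qed.

Definition delta3 (i j : 'I_3) : int := (i == j)%:R.
Definition D := E delta3.

Lemma D_mul_l X : D * E X = E X.
Proof.
rewrite E_mul; apply: E_ext => i l.
rewrite (bigD1 i) //= big1 => [|j /negbTE nj]; first by rewrite /delta3 eqxx mul1r addr0.
by rewrite /delta3 eq_sym nj mul0r.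
Qed.
Lemma D_mul_r X : E X * D = E X.
Proof.
rewrite E_mul; apply: E_ext => i l.
rewrite (bigD1 l) //= big1 => [|j /negbTE nj]; first by rewrite /delta3 eqxx mulr1 addr0.
by rewrite /delta3 nj mulr0.
Qed.
Lemma D_star : cs_star D = D.
Proof. by rewrite /D E_star; apply: E_ext => i j; rewrite /delta3 eq_sym. Qed.

Lemma DP (u : vec) : D * P u = P u.
Proof. by rewrite /P -scalerAr D_mul_l. Qed.
Lemma PD (u : vec) : P u * D = P u.
Proof. by rewrite /P -scalerAl D_mul_r. Qed.
Lemma DD : D * D = D.
Proof. exact: D_mul_l. Qed.

End Units.
Definition ok3 (u w z : vec) : bool :=
  [&& [&& dot3 u w == 0, dot3 u z == 0 & dot3 w z == 0], [&& Nv u != 0, Nv w != 0 & Nv z != 0] &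
   all (fun i => all (fun j => Nv w * Nv z * (vcn u i * vcn u j) + Nv u * Nv z * (vcn w i * vcn w j)
        + Nv u * Nv w * (vcn z i * vcn z j) == (i == j)%:R * (Nv u * Nv w * Nv z)) (iota 0 3)) (iota 0 3)].

Lemma star_opp (B : CStarAlg) (x : B) : cs_star (- x) = - cs_star x.
Proof. by apply/eqP; rewrite -addr_eq0 -cs_starD addNr star0. Qed.

Lemma dot3C (u w : vec) : dot3 u w = dot3 w u.
Proof. by rewrite /dot3 (mulrC u.1.1) (mulrC u.1.2) (mulrC u.2). Qed.

Section Quad.
Variable B : CStarAlg.
Variable e : 'I_3 -> 'I_3 -> B.
Hypothesis emul : forall i j k l, e i j * e k l = if j == k then e i l else 0.
Hypothesis estar : forall i j, cs_star (e i j) = e j i.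

Lemma fld (a b c : int) : a != 0 -> b != 0 -> c != 0 ->
  ((a * b * c)%:~R : CC)^-1 * (b * c)%:~R = (a%:~R)^-1.
Proof.
move=> a0 b0 c0.
have a0' : (a%:~R : CC) != 0 by rewrite intr_eq0.
have b0' : (b%:~R : CC) != 0 by rewrite intr_eq0.
have c0' : (c%:~R : CC) != 0 by rewrite intr_eq0.
rewrite !rmorphM /=; field.
by rewrite a0' b0' c0'.
Qed.

Lemma fld2 (a b c : int) : a != 0 -> b != 0 -> c != 0 ->
  ((a * b * c)%:~R : CC)^-1 * (a * c)%:~R = (b%:~R)^-1.
Proof.
move=> a0 b0 c0.
have a0' : (a%:~R : CC) != 0 by rewrite intr_eq0.
have b0' : (b%:~R : CC) != 0 by rewrite intr_eq0.
have c0' : (c%:~R : CC) != 0 by rewrite intr_eq0.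
rewrite !rmorphM /=; field.
by rewrite a0' b0' c0'.
Qed.
Lemma fld3 (a b c : int) : a != 0 -> b != 0 -> c != 0 ->
  ((a * b * c)%:~R : CC)^-1 * (a * b)%:~R = (c%:~R)^-1.
Proof.
move=> a0 b0 c0.
have a0' : (a%:~R : CC) != 0 by rewrite intr_eq0.
have b0' : (b%:~R : CC) != 0 by rewrite intr_eq0.
have c0' : (c%:~R : CC) != 0 by rewrite intr_eq0.
rewrite !rmorphM /=; field.
by rewrite a0' b0' c0'.
Qed.

Lemma sum3 (u w z : vec) : ok3 u w z -> P e u + P e w + P e z = D e.
Proof.
case/and3P=> _ /and3P[nu nw nz] /allP hall.
pose k := Nv u * Nv w * Nv z.
have k0 : (k%:~R : CC) != 0 by rewrite intr_eq0 !mulf_neq0.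
have hu : P e u = (k%:~R : CC)^-1 *: E e (fun i j => (Nv w * Nv z) * outer u i j).
  by rewrite E_scale scalerA fld.
have hw : P e w = (k%:~R : CC)^-1 *: E e (fun i j => (Nv u * Nv z) * outer w i j).
  by rewrite E_scale scalerA fld2.
have hz : P e z = (k%:~R : CC)^-1 *: E e (fun i j => (Nv u * Nv w) * outer z i j).
  by rewrite E_scale scalerA fld3.
rewrite hu hw hz -!scalerDr -!E_add.
have -> : E e (fun i j => Nv w * Nv z * outer u i j + Nv u * Nv z * outer w i j + Nv u * Nv w * outer z i j)
        = E e (fun i j => k * delta3 i j).
  apply: E_ext => i j.
  have hi : (val i \in iota 0 3) by rewrite mem_iota /= ltn_ord.
  have hj : (val j \in iota 0 3) by rewrite mem_iota /= ltn_ord.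
  have := allP (hall _ hi) _ hj => /eqP ->.
  by rewrite /delta3 /k mulrC; congr (_ * _).
by rewrite E_scale scalerA mulVf // scale1r.
Qed.

Lemma quad_ok (u w z : vec) : ok3 u w z -> quad (P e u) (P e w) (P e z) (1 - D e).
Proof.
move=> h; have h' := h; case/and3P: h' => /and3P[/eqP uw /eqP uz /eqP wz] /and3P[nu nw nz] _.
have hs := sum3 h.
have PQ : forall x, P e x * (1 - D e) = 0 by move=> x; rewrite mulrBr mulr1 PD // subrr.
have QP : forall x, (1 - D e) * P e x = 0 by move=> x; rewrite mulrBl mul1r DP // subrr.
constructor; rewrite ?P_idem ?P_orth ?PQ ?QP ?P_star //.
- by rewrite mulrBr mulr1 !mulrBl mul1r DD // subrr subr0.
- by rewrite dot3C.
- by rewrite dot3C.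
- by rewrite dot3C.
- by rewrite hs addrC subrK.
- by rewrite cs_starD star1 star_opp D_star.
Qed.
End Quad.
Definition u0 : vec := ((0, 0), 1).
Definition u1 : vec := ((0, 1), (-2)).
Definition u2 : vec := ((0, 1), (-1)).
Definition u3 : vec := ((0, 1), 0).
Definition u4 : vec := ((0, 1), 1).
Definition u5 : vec := ((0, 2), 1).
Definition u6 : vec := ((1, (-2)), (-1)).
Definition u7 : vec := ((1, (-2)), 0).
Definition u8 : vec := ((1, (-2)), 1).
Definition u9 : vec := ((1, (-1)), (-2)).
Definition u10 : vec := ((1, (-1)), (-1)).
Definition u11 : vec := ((1, (-1)), 0).
Definition u12 : vec := ((1, (-1)), 1).
Definition u13 : vec := ((1, (-1)), 2).
Definition u14 : vec := ((1, 0), (-2)).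
Definition u15 : vec := ((1, 0), (-1)).
Definition u16 : vec := ((1, 0), 0).
Definition u17 : vec := ((1, 0), 1).
Definition u18 : vec := ((1, 0), 2).
Definition u19 : vec := ((1, 1), (-2)).
Definition u20 : vec := ((1, 1), (-1)).
Definition u21 : vec := ((1, 1), 0).
Definition u22 : vec := ((1, 1), 1).
Definition u23 : vec := ((1, 1), 2).
Definition u24 : vec := ((1, 2), (-1)).
Definition u25 : vec := ((1, 2), 0).
Definition u26 : vec := ((1, 2), 1).
Definition u27 : vec := ((2, (-1)), (-1)).
Definition u28 : vec := ((2, (-1)), 0).
Definition u29 : vec := ((2, (-1)), 1).
Definition u30 : vec := ((2, 0), (-1)).
Definition u31 : vec := ((2, 0), 1).
Definition u32 : vec := ((2, 1), (-1)).
Definition u33 : vec := ((2, 1), 0).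
Definition u34 : vec := ((2, 1), 1).
Definition u35 : vec := ((5, 2), 1).
Definition u36 : vec := ((5, 1), (-2)).
Definition u37 : vec := ((5, (-1)), 2).
Definition u38 : vec := ((1, (-2)), 5).
Definition u39 : vec := ((2, 1), 5).
Definition u40 : vec := ((2, 1), (-5)).
Definition u41 : vec := ((1, (-2)), (-5)).
Definition u42 : vec := ((1, 5), (-2)).
Definition u43 : vec := ((1, 5), 2).
Definition u44 : vec := ((2, 5), 1).
Definition u45 : vec := ((2, (-5)), 1).
Definition u46 : vec := ((2, (-5)), (-1)).
Definition u47 : vec := ((1, (-5)), (-2)).
Definition u48 : vec := ((2, (-1)), 5).
Definition u49 : vec := ((2, (-1)), (-5)).
Definition u50 : vec := ((1, 2), (-5)).
Lemma ks_core (x0 x1 x2 x3 x4 x5 x6 x7 x8 x9 x10 x11 x12 x13 x14 x15 x16 x17 x18 x19 x20 x21 x22 x23 x24 x25 x26 x27 x28 x29 x30 x31 x32 x33 x34 x35 x36 x37 x38 x39 x40 x41 x42 x43 x44 x45 x46 x47 x48 x49 x50 : bool)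
  (H0_0 : x3 || x15 || x17)
  (H0_1 : ~~ (x3 && x15))
  (H0_2 : ~~ (x3 && x17))
  (H0_3 : ~~ (x15 && x17))
  (H1_0 : x0 || x3 || x16)
  (H1_1 : ~~ (x0 && x3))
  (H1_2 : ~~ (x0 && x16))
  (H1_3 : ~~ (x3 && x16))
  (H2_0 : x11 || x19 || x22)
  (H2_1 : ~~ (x11 && x19))
  (H2_2 : ~~ (x11 && x22))
  (H2_3 : ~~ (x19 && x22))
  (H3_0 : x19 || x31 || x47)
  (H3_1 : ~~ (x19 && x31))
  (H3_2 : ~~ (x19 && x47))
  (H3_3 : ~~ (x31 && x47))
  (H4_0 : x3 || x18 || x30)
  (H4_1 : ~~ (x3 && x18))
  (H4_2 : ~~ (x3 && x30))
  (H4_3 : ~~ (x18 && x30))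
  (H5_0 : x2 || x4 || x16)
  (H5_1 : ~~ (x2 && x4))
  (H5_2 : ~~ (x2 && x16))
  (H5_3 : ~~ (x4 && x16))
  (H6_0 : x12 || x15 || x26)
  (H6_1 : ~~ (x12 && x15))
  (H6_2 : ~~ (x12 && x26))
  (H6_3 : ~~ (x15 && x26))
  (H7_0 : x25 || x27 || x48)
  (H7_1 : ~~ (x25 && x27))
  (H7_2 : ~~ (x25 && x48))
  (H7_3 : ~~ (x27 && x48))
  (H8_0 : x18 || x32 || x46)
  (H8_1 : ~~ (x18 && x32))
  (H8_2 : ~~ (x18 && x46))
  (H8_3 : ~~ (x32 && x46))
  (H9_0 : x6 || x17 || x20)
  (H9_1 : ~~ (x6 && x17))
  (H9_2 : ~~ (x6 && x20))
  (H9_3 : ~~ (x17 && x20))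
  (H10_0 : x9 || x31 || x42)
  (H10_1 : ~~ (x9 && x31))
  (H10_2 : ~~ (x9 && x42))
  (H10_3 : ~~ (x31 && x42))
  (H11_0 : x0 || x25 || x28)
  (H11_1 : ~~ (x0 && x25))
  (H11_2 : ~~ (x0 && x28))
  (H11_3 : ~~ (x25 && x28))
  (H12_0 : x6 || x33 || x38)
  (H12_1 : ~~ (x6 && x33))
  (H12_2 : ~~ (x6 && x38))
  (H12_3 : ~~ (x33 && x38))
  (H13_0 : x2 || x10 || x34)
  (H13_1 : ~~ (x2 && x10))
  (H13_2 : ~~ (x2 && x34))
  (H13_3 : ~~ (x10 && x34))
  (H14_0 : x2 || x22 || x27)
  (H14_1 : ~~ (x2 && x22))
  (H14_2 : ~~ (x2 && x27))
  (H14_3 : ~~ (x22 && x27))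
  (H15_0 : x10 || x17 || x24)
  (H15_1 : ~~ (x10 && x17))
  (H15_2 : ~~ (x10 && x24))
  (H15_3 : ~~ (x17 && x24))
  (H16_0 : x26 || x28 || x50)
  (H16_1 : ~~ (x26 && x28))
  (H16_2 : ~~ (x26 && x50))
  (H16_3 : ~~ (x28 && x50))
  (H17_0 : x14 || x34 || x45)
  (H17_1 : ~~ (x14 && x34))
  (H17_2 : ~~ (x14 && x45))
  (H17_3 : ~~ (x34 && x45))
  (H18_0 : x7 || x34 || x40)
  (H18_1 : ~~ (x7 && x34))
  (H18_2 : ~~ (x7 && x40))
  (H18_3 : ~~ (x34 && x40))
  (H19_0 : x9 || x12 || x21)
  (H19_1 : ~~ (x9 && x12))
  (H19_2 : ~~ (x9 && x21))
  (H19_3 : ~~ (x12 && x21))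
  (H20_0 : x1 || x6 || x35)
  (H20_1 : ~~ (x1 && x6))
  (H20_2 : ~~ (x1 && x35))
  (H20_3 : ~~ (x6 && x35))
  (H21_0 : x5 || x19 || x37)
  (H21_1 : ~~ (x5 && x19))
  (H21_2 : ~~ (x5 && x37))
  (H21_3 : ~~ (x19 && x37))
  (H22_0 : x13 || x30 || x43)
  (H22_1 : ~~ (x13 && x30))
  (H22_2 : ~~ (x13 && x43))
  (H22_3 : ~~ (x30 && x43))
  (H23_0 : x11 || x20 || x23)
  (H23_1 : ~~ (x11 && x20))
  (H23_2 : ~~ (x11 && x23))
  (H23_3 : ~~ (x20 && x23))
  (H24_0 : x4 || x20 || x29)
  (H24_1 : ~~ (x4 && x20))
  (H24_2 : ~~ (x4 && x29))
  (H24_3 : ~~ (x20 && x29))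
  (H25_0 : x7 || x32 || x39)
  (H25_1 : ~~ (x7 && x32))
  (H25_2 : ~~ (x7 && x39))
  (H25_3 : ~~ (x32 && x39))
  (H26_0 : x8 || x33 || x41)
  (H26_1 : ~~ (x8 && x33))
  (H26_2 : ~~ (x8 && x41))
  (H26_3 : ~~ (x33 && x41))
  (H27_0 : x10 || x13 || x21)
  (H27_1 : ~~ (x10 && x13))
  (H27_2 : ~~ (x10 && x21))
  (H27_3 : ~~ (x13 && x21))
  (H28_0 : x14 || x29 || x44)
  (H28_1 : ~~ (x14 && x29))
  (H28_2 : ~~ (x14 && x44))
  (H28_3 : ~~ (x29 && x44))
  (H29_0 : x8 || x15 || x22)
  (H29_1 : ~~ (x8 && x15))
  (H29_2 : ~~ (x8 && x22))
  (H29_3 : ~~ (x15 && x22))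
  (H30_0 : x3 || x14 || x31)
  (H30_1 : ~~ (x3 && x14))
  (H30_2 : ~~ (x3 && x31))
  (H30_3 : ~~ (x14 && x31))
  (H31_0 : x25 || x29 || x49)
  (H31_1 : ~~ (x25 && x29))
  (H31_2 : ~~ (x25 && x49))
  (H31_3 : ~~ (x29 && x49))
  (H32_0 : x4 || x12 || x32)
  (H32_1 : ~~ (x4 && x12))
  (H32_2 : ~~ (x4 && x32))
  (H32_3 : ~~ (x12 && x32))
  (H33_0 : x0 || x11 || x21)
  (H33_1 : ~~ (x0 && x11))
  (H33_2 : ~~ (x0 && x21))
  (H33_3 : ~~ (x11 && x21))
  (H34_0 : x5 || x13 || x36)
  (H34_1 : ~~ (x5 && x13))
  (H34_2 : ~~ (x5 && x36))
  (H34_3 : ~~ (x13 && x36))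
  (H35_0 : x1 || x5 || x16)
  (H35_1 : ~~ (x1 && x5))
  (H35_2 : ~~ (x1 && x16))
  (H35_3 : ~~ (x5 && x16))
  (H36_0 : x0 || x7 || x33)
  (H36_1 : ~~ (x0 && x7))
  (H36_2 : ~~ (x0 && x33))
  (H36_3 : ~~ (x7 && x33)) : False.
Proof.
  destruct x0.
  - 
    destruct x3; first by move: H1_1.
    destruct x16; first by move: H1_2.
    destruct x25; first by move: H11_1.
    destruct x28; first by move: H11_2.
    destruct x11; first by move: H33_1.
    destruct x21; first by move: H33_2.
    destruct x7; first by move: H36_1.
    destruct x33; first by move: H36_2.
    destruct x2.
    - 
      destruct x4; first by move: H5_1.
      destruct x10; first by move: H13_1.
      destruct x34; first by move: H13_2.
      destruct x22; first by move: H14_1.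
      destruct x19; last by move: H2_0.
      destruct x31; first by move: H3_1.
      destruct x47; first by move: H3_2.
      destruct x27; first by move: H14_2.
      destruct x48; last by move: H7_0.
      destruct x40; last by move: H18_0.
      destruct x5; first by move: H21_1.
      destruct x37; first by move: H21_3.
      destruct x13; last by move: H27_0.
      destruct x30; first by move: H22_1.
      destruct x18; last by move: H4_0.
      destruct x32; first by move: H8_1.
      destruct x46; first by move: H8_2.
      destruct x43; first by move: H22_2.
      destruct x39; last by move: H25_0.
      destruct x14; last by move: H30_0.
      destruct x45; first by move: H17_2.
      destruct x29; first by move: H28_1.
      destruct x20; last by move: H24_0.
      destruct x6; first by move: H9_2.
      destruct x17; first by move: H9_3.
      destruct x15; last by move: H0_0.
      destruct x12; first by move: H6_1.
      by move: H32_0.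
    - 
      destruct x4; last by move: H5_0.
      destruct x20; first by move: H24_1.
      destruct x23; last by move: H23_0.
      destruct x29; first by move: H24_2.
      destruct x49; last by move: H31_0.
      destruct x12; first by move: H32_1.
      destruct x9; last by move: H19_0.
      destruct x31; first by move: H10_1.
      destruct x42; first by move: H10_2.
      destruct x14; last by move: H30_0.
      destruct x34; first by move: H17_1.
      destruct x10; last by move: H13_0.
      destruct x17; first by move: H15_1.
      destruct x15; last by move: H0_0.
      destruct x26; first by move: H6_3.
      destruct x6; last by move: H9_0.
      destruct x38; first by move: H12_2.
      destruct x24; first by move: H15_2.
      destruct x50; last by move: H16_0.
      destruct x45; first by move: H17_2.
      destruct x40; last by move: H18_0.
      destruct x1; first by move: H20_1.
      destruct x35; first by move: H20_3.
      destruct x13; first by move: H27_1.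
      destruct x44; first by move: H28_2.
      destruct x8; first by move: H29_1.
      destruct x41; last by move: H26_0.
      destruct x22; first by move: H29_3.
      destruct x19; last by move: H2_0.
      destruct x47; first by move: H3_2.
      destruct x27; last by move: H14_0.
      destruct x48; first by move: H7_3.
      destruct x5; first by move: H21_1.
      by move: H35_0.
  - 
    destruct x3.
    - 
      destruct x15; first by move: H0_1.
      destruct x17; first by move: H0_2.
      destruct x16; first by move: H1_3.
      destruct x18; first by move: H4_1.
      destruct x30; first by move: H4_2.
      destruct x14; first by move: H30_1.
      destruct x31; first by move: H30_2.
      destruct x2.
      - 
        destruct x4; first by move: H5_1.
        destruct x10; first by move: H13_1.
        destruct x34; first by move: H13_2.
        destruct x22; first by move: H14_1.
        destruct x27; first by move: H14_2.
        destruct x24; last by move: H15_0.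
        destruct x45; last by move: H17_0.
        destruct x8; last by move: H29_0.
        destruct x33; first by move: H26_1.
        destruct x41; first by move: H26_2.
        destruct x7; last by move: H36_0.
        destruct x40; first by move: H18_2.
        destruct x32; first by move: H25_1.
        destruct x46; last by move: H8_0.
        destruct x39; first by move: H25_2.
        destruct x12; last by move: H32_0.
        destruct x26; first by move: H6_2.
        destruct x9; first by move: H19_1.
        destruct x42; last by move: H10_0.
        destruct x21; first by move: H19_3.
        destruct x13; last by move: H27_0.
        destruct x43; first by move: H22_2.
        destruct x11; last by move: H33_0.
        destruct x19; first by move: H2_1.
        destruct x47; last by move: H3_0.
        destruct x20; first by move: H23_1.
        destruct x6; last by move: H9_0.
        destruct x38; first by move: H12_2.
        destruct x1; first by move: H20_1.
        destruct x35; first by move: H20_3.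
        destruct x23; first by move: H23_2.
        destruct x29; last by move: H24_0.
        destruct x44; first by move: H28_3.
        destruct x25; first by move: H31_1.
        destruct x48; last by move: H7_0.
        destruct x28; last by move: H11_0.
        destruct x50; first by move: H16_3.
        destruct x49; first by move: H31_3.
        destruct x5; first by move: H34_1.
        by move: H35_0.
      - 
        destruct x4; last by move: H5_0.
        destruct x20; first by move: H24_1.
        destruct x6; last by move: H9_0.
        destruct x33; first by move: H12_1.
        destruct x38; first by move: H12_2.
        destruct x1; first by move: H20_1.
        destruct x35; first by move: H20_3.
        destruct x29; first by move: H24_2.
        destruct x44; last by move: H28_0.
        destruct x12; first by move: H32_1.
        destruct x26; last by move: H6_0.
        destruct x28; first by move: H16_1.
        destruct x25; last by move: H11_0.
        destruct x27; first by move: H7_1.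
        destruct x48; first by move: H7_2.
        destruct x22; last by move: H14_0.
        destruct x11; first by move: H2_2.
        destruct x19; first by move: H2_3.
        destruct x47; last by move: H3_0.
        destruct x50; first by move: H16_2.
        destruct x23; last by move: H23_0.
        destruct x8; first by move: H29_2.
        destruct x41; last by move: H26_0.
        destruct x49; first by move: H31_2.
        destruct x32; first by move: H32_2.
        destruct x46; last by move: H8_0.
        destruct x21; last by move: H33_0.
        destruct x9; first by move: H19_2.
        destruct x42; last by move: H10_0.
        destruct x10; first by move: H27_2.
        destruct x34; last by move: H13_0.
        destruct x24; last by move: H15_0.
        destruct x45; first by move: H17_3.
        destruct x7; first by move: H18_1.
        by move: H36_0.
    - 
      destruct x16; last by move: H1_0.
      destruct x2; first by move: H5_2.
      destruct x4; first by move: H5_3.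
      destruct x1; first by move: H35_2.
      destruct x5; first by move: H35_3.
      destruct x6.
      - 
        destruct x17; first by move: H9_1.
        destruct x15; last by move: H0_0.
        destruct x12; first by move: H6_1.
        destruct x26; first by move: H6_3.
        destruct x20; first by move: H9_2.
        destruct x33; first by move: H12_1.
        destruct x38; first by move: H12_2.
        destruct x35; first by move: H20_3.
        destruct x29; last by move: H24_0.
        destruct x14; first by move: H28_1.
        destruct x44; first by move: H28_3.
        destruct x8; first by move: H29_1.
        destruct x41; last by move: H26_0.
        destruct x22; first by move: H29_3.
        destruct x27; last by move: H14_0.
        destruct x25; first by move: H7_1.
        destruct x48; first by move: H7_3.
        destruct x28; last by move: H11_0.
        destruct x50; first by move: H16_3.
        destruct x31; last by move: H30_0.
        destruct x19; first by move: H3_1.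
        destruct x11; last by move: H2_0.
        destruct x47; first by move: H3_3.
        destruct x9; first by move: H10_1.
        destruct x42; first by move: H10_3.
        destruct x21; last by move: H19_0.
        by move: H33_3.
      - 
        destruct x35; last by move: H20_0.
        destruct x7.
        - 
          destruct x34; first by move: H18_1.
          destruct x10; last by move: H13_0.
          destruct x17; first by move: H15_1.
          destruct x15; last by move: H0_0.
          destruct x12; first by move: H6_1.
          destruct x26; first by move: H6_3.
          destruct x20; last by move: H9_0.
          destruct x24; first by move: H15_2.
          destruct x40; first by move: H18_2.
          destruct x11; first by move: H23_1.
          destruct x23; first by move: H23_3.
          destruct x29; first by move: H24_3.
          destruct x32; first by move: H25_1.
          by move: H32_0.
        - 
          destruct x33; last by move: H36_0.
          destruct x38; first by move: H12_3.
          destruct x8; first by move: H26_1.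
          destruct x41; first by move: H26_3.
          destruct x10.
          - 
            destruct x34; first by move: H13_3.
            destruct x17; first by move: H15_1.
            destruct x15; last by move: H0_0.
            destruct x12; first by move: H6_1.
            destruct x26; first by move: H6_3.
            destruct x20; last by move: H9_0.
            destruct x24; first by move: H15_2.
            destruct x40; last by move: H18_0.
            destruct x11; first by move: H23_1.
            destruct x23; first by move: H23_3.
            destruct x29; first by move: H24_3.
            destruct x13; first by move: H27_1.
            destruct x21; first by move: H27_2.
            by move: H33_0.
          - 
            destruct x34; last by move: H13_0.
            destruct x14; first by move: H17_1.
            destruct x45; first by move: H17_3.
            destruct x40; first by move: H18_3.
            destruct x31; last by move: H30_0.
            destruct x19; first by move: H3_1.
            destruct x47; first by move: H3_3.
            destruct x9; first by move: H10_1.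
            destruct x42; first by move: H10_3.
            destruct x37; last by move: H21_0.
            destruct x25.
            - 
              destruct x27; first by move: H7_1.
              destruct x48; first by move: H7_2.
              destruct x28; first by move: H11_3.
              destruct x22; last by move: H14_0.
              destruct x11; first by move: H2_2.
              destruct x15; first by move: H29_3.
              destruct x17; last by move: H0_0.
              destruct x20; first by move: H9_3.
              destruct x24; first by move: H15_3.
              destruct x23; last by move: H23_0.
              destruct x29; last by move: H24_0.
              by move: H31_1.
            - 
              destruct x28; last by move: H11_0.
              destruct x26; first by move: H16_1.
              destruct x50; first by move: H16_3.
              destruct x11.
              - 
                destruct x22; first by move: H2_2.
                destruct x27; last by move: H14_0.
                destruct x48; first by move: H7_3.
                destruct x20; first by move: H23_1.
                destruct x17; last by move: H9_0.
                destruct x15; first by move: H0_3.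
                by move: H29_0.
              - 
                destruct x22; last by move: H2_0.
                destruct x27; first by move: H14_3.
                destruct x48; last by move: H7_0.
                destruct x15; first by move: H29_3.
                destruct x17; last by move: H0_0.
                destruct x12; last by move: H6_0.
                destruct x20; first by move: H9_3.
                destruct x24; first by move: H15_3.
                destruct x21; first by move: H19_3.
                by move: H33_0.
Qed.

Lemma KS (B : CStarAlg) (v : B -> bool)
  (Hv : forall p q r : B, tri p q r -> eo (v p) (v q) (v r))
  (e : 'I_3 -> 'I_3 -> B)
  (emul : forall i j k l, e i j * e k l = if j == k then e i l else 0)
  (estar : forall i j, cs_star (e i j) = e j i)
  (h : v (P e u16) = true) : False.
Proof.
have vQ : v (1 - D e) = false.
  have o : ok3 u16 u0 u3 by vm_compute.
  exact: (quad_s Hv (quad_ok emul estar o) h).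
have o0 : ok3 u3 u15 u17 by vm_compute.
have := quad_eo Hv (quad_ok emul estar o0) vQ; rewrite /eo => /and4P[H0_0 H0_1 H0_2 H0_3].
have o1 : ok3 u0 u3 u16 by vm_compute.
have := quad_eo Hv (quad_ok emul estar o1) vQ; rewrite /eo => /and4P[H1_0 H1_1 H1_2 H1_3].
have o2 : ok3 u11 u19 u22 by vm_compute.
have := quad_eo Hv (quad_ok emul estar o2) vQ; rewrite /eo => /and4P[H2_0 H2_1 H2_2 H2_3].
have o3 : ok3 u19 u31 u47 by vm_compute.
have := quad_eo Hv (quad_ok emul estar o3) vQ; rewrite /eo => /and4P[H3_0 H3_1 H3_2 H3_3].
have o4 : ok3 u3 u18 u30 by vm_compute.
have := quad_eo Hv (quad_ok emul estar o4) vQ; rewrite /eo => /and4P[H4_0 H4_1 H4_2 H4_3].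
have o5 : ok3 u2 u4 u16 by vm_compute.
have := quad_eo Hv (quad_ok emul estar o5) vQ; rewrite /eo => /and4P[H5_0 H5_1 H5_2 H5_3].
have o6 : ok3 u12 u15 u26 by vm_compute.
have := quad_eo Hv (quad_ok emul estar o6) vQ; rewrite /eo => /and4P[H6_0 H6_1 H6_2 H6_3].
have o7 : ok3 u25 u27 u48 by vm_compute.
have := quad_eo Hv (quad_ok emul estar o7) vQ; rewrite /eo => /and4P[H7_0 H7_1 H7_2 H7_3].
have o8 : ok3 u18 u32 u46 by vm_compute.
have := quad_eo Hv (quad_ok emul estar o8) vQ; rewrite /eo => /and4P[H8_0 H8_1 H8_2 H8_3].
have o9 : ok3 u6 u17 u20 by vm_compute.
have := quad_eo Hv (quad_ok emul estar o9) vQ; rewrite /eo => /and4P[H9_0 H9_1 H9_2 H9_3].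
have o10 : ok3 u9 u31 u42 by vm_compute.
have := quad_eo Hv (quad_ok emul estar o10) vQ; rewrite /eo => /and4P[H10_0 H10_1 H10_2 H10_3].
have o11 : ok3 u0 u25 u28 by vm_compute.
have := quad_eo Hv (quad_ok emul estar o11) vQ; rewrite /eo => /and4P[H11_0 H11_1 H11_2 H11_3].
have o12 : ok3 u6 u33 u38 by vm_compute.
have := quad_eo Hv (quad_ok emul estar o12) vQ; rewrite /eo => /and4P[H12_0 H12_1 H12_2 H12_3].
have o13 : ok3 u2 u10 u34 by vm_compute.
have := quad_eo Hv (quad_ok emul estar o13) vQ; rewrite /eo => /and4P[H13_0 H13_1 H13_2 H13_3].
have o14 : ok3 u2 u22 u27 by vm_compute.
have := quad_eo Hv (quad_ok emul estar o14) vQ; rewrite /eo => /and4P[H14_0 H14_1 H14_2 H14_3].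
have o15 : ok3 u10 u17 u24 by vm_compute.
have := quad_eo Hv (quad_ok emul estar o15) vQ; rewrite /eo => /and4P[H15_0 H15_1 H15_2 H15_3].
have o16 : ok3 u26 u28 u50 by vm_compute.
have := quad_eo Hv (quad_ok emul estar o16) vQ; rewrite /eo => /and4P[H16_0 H16_1 H16_2 H16_3].
have o17 : ok3 u14 u34 u45 by vm_compute.
have := quad_eo Hv (quad_ok emul estar o17) vQ; rewrite /eo => /and4P[H17_0 H17_1 H17_2 H17_3].
have o18 : ok3 u7 u34 u40 by vm_compute.
have := quad_eo Hv (quad_ok emul estar o18) vQ; rewrite /eo => /and4P[H18_0 H18_1 H18_2 H18_3].
have o19 : ok3 u9 u12 u21 by vm_compute.
have := quad_eo Hv (quad_ok emul estar o19) vQ; rewrite /eo => /and4P[H19_0 H19_1 H19_2 H19_3].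
have o20 : ok3 u1 u6 u35 by vm_compute.
have := quad_eo Hv (quad_ok emul estar o20) vQ; rewrite /eo => /and4P[H20_0 H20_1 H20_2 H20_3].
have o21 : ok3 u5 u19 u37 by vm_compute.
have := quad_eo Hv (quad_ok emul estar o21) vQ; rewrite /eo => /and4P[H21_0 H21_1 H21_2 H21_3].
have o22 : ok3 u13 u30 u43 by vm_compute.
have := quad_eo Hv (quad_ok emul estar o22) vQ; rewrite /eo => /and4P[H22_0 H22_1 H22_2 H22_3].
have o23 : ok3 u11 u20 u23 by vm_compute.
have := quad_eo Hv (quad_ok emul estar o23) vQ; rewrite /eo => /and4P[H23_0 H23_1 H23_2 H23_3].
have o24 : ok3 u4 u20 u29 by vm_compute.
have := quad_eo Hv (quad_ok emul estar o24) vQ; rewrite /eo => /and4P[H24_0 H24_1 H24_2 H24_3].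
have o25 : ok3 u7 u32 u39 by vm_compute.
have := quad_eo Hv (quad_ok emul estar o25) vQ; rewrite /eo => /and4P[H25_0 H25_1 H25_2 H25_3].
have o26 : ok3 u8 u33 u41 by vm_compute.
have := quad_eo Hv (quad_ok emul estar o26) vQ; rewrite /eo => /and4P[H26_0 H26_1 H26_2 H26_3].
have o27 : ok3 u10 u13 u21 by vm_compute.
have := quad_eo Hv (quad_ok emul estar o27) vQ; rewrite /eo => /and4P[H27_0 H27_1 H27_2 H27_3].
have o28 : ok3 u14 u29 u44 by vm_compute.
have := quad_eo Hv (quad_ok emul estar o28) vQ; rewrite /eo => /and4P[H28_0 H28_1 H28_2 H28_3].
have o29 : ok3 u8 u15 u22 by vm_compute.
have := quad_eo Hv (quad_ok emul estar o29) vQ; rewrite /eo => /and4P[H29_0 H29_1 H29_2 H29_3].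
have o30 : ok3 u3 u14 u31 by vm_compute.
have := quad_eo Hv (quad_ok emul estar o30) vQ; rewrite /eo => /and4P[H30_0 H30_1 H30_2 H30_3].
have o31 : ok3 u25 u29 u49 by vm_compute.
have := quad_eo Hv (quad_ok emul estar o31) vQ; rewrite /eo => /and4P[H31_0 H31_1 H31_2 H31_3].
have o32 : ok3 u4 u12 u32 by vm_compute.
have := quad_eo Hv (quad_ok emul estar o32) vQ; rewrite /eo => /and4P[H32_0 H32_1 H32_2 H32_3].
have o33 : ok3 u0 u11 u21 by vm_compute.
have := quad_eo Hv (quad_ok emul estar o33) vQ; rewrite /eo => /and4P[H33_0 H33_1 H33_2 H33_3].
have o34 : ok3 u5 u13 u36 by vm_compute.
have := quad_eo Hv (quad_ok emul estar o34) vQ; rewrite /eo => /and4P[H34_0 H34_1 H34_2 H34_3].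
have o35 : ok3 u1 u5 u16 by vm_compute.
have := quad_eo Hv (quad_ok emul estar o35) vQ; rewrite /eo => /and4P[H35_0 H35_1 H35_2 H35_3].
have o36 : ok3 u0 u7 u33 by vm_compute.
have := quad_eo Hv (quad_ok emul estar o36) vQ; rewrite /eo => /and4P[H36_0 H36_1 H36_2 H36_3].
exact: (ks_core H0_0 H0_1 H0_2 H0_3 H1_0 H1_1 H1_2 H1_3 H2_0 H2_1 H2_2 H2_3 H3_0 H3_1 H3_2 H3_3 H4_0 H4_1 H4_2 H4_3 H5_0 H5_1 H5_2 H5_3 H6_0 H6_1 H6_2 H6_3 H7_0 H7_1 H7_2 H7_3 H8_0 H8_1 H8_2 H8_3 H9_0 H9_1 H9_2 H9_3 H10_0 H10_1 H10_2 H10_3 H11_0 H11_1 H11_2 H11_3 H12_0 H12_1 H12_2 H12_3 H13_0 H13_1 H13_2 H13_3 H14_0 H14_1 H14_2 H14_3 H15_0 H15_1 H15_2 H15_3 H16_0 H16_1 H16_2 H16_3 H17_0 H17_1 H17_2 H17_3 H18_0 H18_1 H18_2 H18_3 H19_0 H19_1 H19_2 H19_3 H20_0 H20_1 H20_2 H20_3 H21_0 H21_1 H21_2 H21_3 H22_0 H22_1 H22_2 H22_3 H23_0 H23_1 H23_2 H23_3 H24_0 H24_1 H24_2 H24_3 H25_0 H25_1 H25_2 H25_3 H26_0 H26_1 H26_2 H26_3 H27_0 H27_1 H27_2 H27_3 H28_0 H28_1 H28_2 H28_3 H29_0 H29_1 H29_2 H29_3 H30_0 H30_1 H30_2 H30_3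 H31_0 H31_1 H31_2 H31_3 H32_0 H32_1 H32_2 H32_3 H33_0 H33_1 H33_2 H33_3 H34_0 H34_1 H34_2 H34_3 H35_0 H35_1 H35_2 H35_3 H36_0 H36_1 H36_2 H36_3).
Qed.
Section Mat.
Variables (A : CStarAlg) (n : nat) (B : CStarAlg) (phi : 'M[A]_n -> B).
Hypothesis pD : forall X Y, phi (X + Y) = phi X + phi Y.
Hypothesis pM : forall X Y, phi (X *m Y) = phi X * phi Y.
Hypothesis p1 : phi 1%:M = 1.
Hypothesis pS : forall X, phi (mx_star X) = cs_star (phi X).

Lemma phi0 : phi 0 = 0.
Proof. by apply: (addrI (phi 0)); rewrite -pD !addr0. Qed.

Lemma star_nat (b : bool) : cs_star (b%:R : A) = b%:R.
Proof. by case: b; rewrite ?star1 ?star0. Qed.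

Definition dg (S : pred 'I_n) : 'M[A]_n := \matrix_(i, j) ((i == j) && S i)%:R.

Lemma dg_ext S T : S =1 T -> dg S = dg T.
Proof. by move=> h; apply/matrixP => i j; rewrite !mxE h. Qed.

Lemma dg_mul S T : dg S *m dg T = dg (predI S T).
Proof.
apply/matrixP => i k; rewrite !mxE (bigD1 i) //= big1 => [|j /negbTE nj].
  rewrite !mxE eqxx /= addr0.
  by case: (i == k); case: (S i); case: (T i); rewrite /= ?mulr1 ?mulr0 ?mul0r.
by rewrite !mxE eq_sym nj mul0r.
Qed.

Lemma dg_star S : mx_star (dg S) = dg S.
Proof.
apply/matrixP => i j; rewrite !mxE star_nat eq_sym.
by case: eqP => [->|].
Qed.

Lemma dg_add S T : (forall i, ~~ (S i && T i)) -> dg S + dg T = dg (predU S T).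
Proof.
move=> h; apply/matrixP => i j; rewrite !mxE /=.
case: (i == j); rewrite /= ?addr0 //.
by move: (h i); case: (S i); case: (T i); rewrite /= ?addr0 ?add0r.
Qed.

Lemma dg_T : dg predT = 1%:M.
Proof. by apply/matrixP => i j; rewrite !mxE andbT. Qed.
Lemma dg_0 : dg pred0 = 0.
Proof. by apply/matrixP => i j; rewrite !mxE andbF. Qed.

Lemma tri_dg S1 S2 S3 :
  (forall i, ~~ (S1 i && S2 i)) -> (forall i, ~~ (S1 i && S3 i)) -> (forall i, ~~ (S2 i && S3 i)) ->
  (forall i, [|| S1 i, S2 i | S3 i]) ->
  tri (phi (dg S1)) (phi (dg S2)) (phi (dg S3)).
Proof.
move=> h12 h13 h23 hc.
have orth : forall S T : pred 'I_n, (forall i, ~~ (S i && T i)) -> phi (dg S) * phi (dg T) = 0.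
  move=> S T h; rewrite -pM dg_mul (dg_ext (T := pred0)) ?dg_0 ?phi0 // => i /=.
  by apply/negbTE.
have idem : forall S, phi (dg S) * phi (dg S) = phi (dg S).
  by move=> S; rewrite -pM dg_mul; congr phi; apply: dg_ext => i /=; rewrite andbb.
have sym : forall S T : pred 'I_n, (forall i, ~~ (S i && T i)) -> (forall i, ~~ (T i && S i)).
  by move=> S T h i; move: (h i); case: (S i); case: (T i).
constructor; rewrite ?idem ?orth //; try (by apply: sym).
- rewrite -!pD dg_add // (dg_add (S := predU S1 S2)) => [|i /=].
    rewrite -p1 -dg_T; congr phi; apply: dg_ext => i /=; move: (hc i).
    by case: (S1 i); case: (S2 i); case: (S3 i).
  by move: (h13 i) (h23 i); case: (S1 i); case: (S2 i); case: (S3 i).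
- by rewrite -pS dg_star.
- by rewrite -pS dg_star.
- by rewrite -pS dg_star.
Qed.

Lemma find_j (v : B -> bool) :
  (forall p q r : B, tri p q r -> eo (v p) (v q) (v r)) ->
  exists j : 'I_n, v (phi (dg (pred1 j))) = true.
Proof.
move=> Hv; apply: NNPP => hno.
have hf : forall j : 'I_n, v (phi (dg (pred1 j))) = false.
  move=> j; apply/negbTE/negP => hj; apply: hno; by exists j.
have [v0 v1] := v01 Hv.
have step : forall m, (m <= n)%N -> v (phi (dg [pred k : 'I_n | (k < m)%N])) = false.
  elim=> [|m IH] hm.
    by rewrite (dg_ext (T := pred0)) ?dg_0 ?phi0.
  have hmn : (m < n)%N by [].
  pose j := Ordinal hmn.
  have H := @tri_dg [pred k : 'I_n | (k < m)%N] (pred1 j) [pred k : 'I_n | ~~ (k < m.+1)%N].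
  have Htri : tri (phi (dg [pred k : 'I_n | (k < m)%N])) (phi (dg (pred1 j))) (phi (dg [pred k : 'I_n | ~~ (k < m.+1)%N])).
    apply: H => i /=.
    - by apply/negP => /andP[h1 /eqP h2]; move: h1; rewrite h2 /= ltnn.
    - by apply/negP => /andP[h1 h2]; move: h2; rewrite ltnS (ltnW h1).
    - by apply/negP => /andP[/eqP h1 h2]; move: h2; rewrite h1 /= ltnSn.
    - case: (ltnP i m) => //= h1; case: (i =P j) => //= h2.
      apply/negP; rewrite ltnS => h3; apply: h2; apply: val_inj => /=; by apply/eqP; rewrite eqn_leq h1 h3.
  have := vsum Hv Htri; rewrite -pD dg_add; last first.
    by move=> i /=; apply/negP => /andP[h1 /eqP h2]; move: h1; rewrite h2 /= ltnn.
  rewrite IH ?(ltnW hm) // hf /= => <-; congr v; congr phi; apply: dg_ext => i /=.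
  rewrite ltnS leq_eqVlt orbC; congr orb; apply/eqP/eqP => [->|h]//; by apply: val_inj.
have := step n (leqnn n).
rewrite (dg_ext (T := predT)) ?dg_T ?p1 ?v1 // => i /=; exact: ltn_ord.
Qed.

End Mat.
Lemma P100 (B : CStarAlg) (e : 'I_3 -> 'I_3 -> B) : P e u16 = e ord0 ord0.
Proof.
rewrite /P /E (_ : Nv u16 = 1) // invr1 scale1r !big_ord_recl !big_ord0 /outer /vc /=.
by rewrite ?mulr0 ?mul0r ?mulr1 ?rmorph0 ?rmorph1 ?scale0r ?scale1r ?addr0.
Qed.

Lemma mx_star_delta (A : CStarAlg) n (i j : 'I_n) : mx_star (delta_mx i j : 'M[A]_n) = delta_mx j i.
Proof. by apply/matrixP => a b; rewrite !mxE star_nat andbC. Qed.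

Lemma dg_pred1 (A : CStarAlg) n (j : 'I_n) : dg A (pred1 j) = delta_mx j j.
Proof.
apply/matrixP => a b; rewrite !mxE /=.
have [->|nab] := eqVneq a b; first by rewrite andbb.
case: (a =P j) => [aj|] //=; case: (b =P j) => [bj|] //=.
by move: nab; rewrite aj bj eqxx.
Qed.

Theorem corollary5p9 (F : CoFunctor) :
  restr_iso_Gelf F ->
  forall (A : CStarAlg) (n : nat), (3 <= n)%N ->
  forall B : CStarAlg, is_Mn A n B -> Fobj F B -> False.
Proof.
move=> HF A n hn B [phi [_ [pD pZ pM p1 pS]]] y.
have [v Hv] := valuation HF y.
have [j hj] := find_j pD pM p1 pS Hv.
pose j0 : 'I_n := widen_ord hn ord0.
pose idx (i : 'I_3) : 'I_n := tperm j0 j (widen_ord hn i).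
have idx_inj : injective idx.
  by move=> a b /perm_inj h; apply: val_inj; move: (congr1 val h).
pose e (a b : 'I_3) := phi (delta_mx (idx a) (idx b)).
have emul : forall a b c d, e a b * e c d = if b == c then e a d else 0.
  move=> a b c d; rewrite /e -pM mul_delta_mx_cond (inj_eq idx_inj).
  by case: (b == c); rewrite ?mulr1n ?mulr0n ?(phi0 pD).
have estar : forall a b, cs_star (e a b) = e b a.
  by move=> a b; rewrite /e -pS mx_star_delta.
apply: (KS Hv emul estar).
rewrite P100 /e.
have -> : idx ord0 = j by rewrite /idx tpermL.
by rewrite -dg_pred1.
Qed.
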